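(* The target counital subalgebra of the quantum groupoid $H_\mathcal{C}$ is $$H_t(H_\mathcal{C})=\mathrm{span}_a\Big\{\sum_{k,b}\frac{\sqrt{d_k}}{\sqrt{d_a}}\,e^{ab}_{k;ab}\Big\},$$ where $a$ ranges over $Irr(\mathcal{C})$, and the inner sum is over $k,b\in Irr(\mathcal{C})$ with $(a,k,b)$ admissible. Moreover $\dim_\mathbb{C}H_t(H_\mathcal{C})=\dim_\mathbb{C}V_{\mathbf{1}}$, so $H_t(H_\mathcal{C})\cong V_{\mathbf{1}}$ as $H_\mathcal{C}$-modules. In particular the tensor unit $H_t(H_\mathcal{C})$ of $Rep(H_\mathcal{C})$ is simple.
   Context: Let $\mathcal{C}$ be a unitary fusion category that is multiplicity-free, whose simple objects are self-dual, and whose Frobenius–Schur indicators are trivial. Choose its $F$-matrices to be unitary, and normalize theta symbols as $\theta(a,b,c)=\sqrt{d_ad_bd_c}$, where $d_a$ is the quantum dimension of $a$ and $Irr(\mathcal{C})$ is the set of simple objects. The Kitaev–Kong $C^*$-quantum groupoid (weak Hopf algebra) is $$H_\mathcal{C}=\bigoplus_{a,b,c,d,i\in Irr(\mathcal{C})}Hom(b,a\otimes i)\otimes Hom(i\otimes d,c).$$ It has basis vectors $e^{ab}_{i;cd}$, pictured as an ''H''-shaped graph: left vertical edge labelled $a$ on top and $b$ on the bottom, right vertical edge labelled $c$ on top and $d$ on the bottom, and horizontal rung labelled $i$. The structure maps are as follows. - Multiplication: $e^{ab}_{i;cd}\,e^{a'b'}_{i';c'd'}=\frac{\delta_{c,a'}\delta_{d,b'}\delta_{i,i'}}{\sqrt{d_i}}\,e^{ab}_{i;c'd'}$.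 - Unit: $\eta=\sum_{a,b,i}\sqrt{d_i}\,e^{ab}_{i;ab}$. - Counit: $\varepsilon(e^{ab}_{i;cd})=\delta_{a,b}\delta_{c,d}\delta_{i,\mathbf{1}}$. - Comultiplication: $$\Delta(e^{ab}_{i;cd})=\sum_{j,k,p,q}\frac{\sqrt{d_jd_k}}{\sqrt{d_i}}F^{ajk}_{b;ip}F^{dkj}_{c;iq}\;e^{ap}_{j;cq}\otimes e^{pb}_{k;qd},$$ where $j,k$ range over labels admissible with $i$. - Antipode: $S(e^{ab}_{i;cd})=\frac{\sqrt{d_bd_c}}{\sqrt{d_ad_d}}e^{dc}_{i;ba}$. - Star: $(e^{ab}_{i;cd})^*=e^{cd}_{i;ab}$. The target counital map is $\varepsilon_t(h)=\varepsilon(\eta_{(1)}h)\eta_{(2)}$ (Sweedler notation $\Delta(\eta)=\eta_{(1)}\otimes\eta_{(2)}$). The target counital subalgebra is $H_t=\varepsilon_t(H_\mathcal{C})$. It is the tensor unit of $Rep(H_\mathcal{C})$, with action $h\cdot z=\varepsilon_t(hz)$. For $i\in Irr(\mathcal{C})$, let $V_i=\mathrm{span}\{v^{ab}_i : (i,a,b)\text{ admissible}\}$, where $v^{ab}_i$ is a trivalent vertex with legs labelled $a,b,i$. Its $H_\mathcal{C}$-module structure is $e^{ab}_{j;cd}\cdot v^{pq}_i=\frac{\delta_{i,j}\delta_{c,p}\delta_{d,q}}{\sqrt{d_i}}v^{ab}_i$. The $V_i$ are the simple $H_\mathcal{C}$-modules. *)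

(* Defs.v *)
From HB Require Import structures.
From mathcomp Require Import all_boot all_order all_algebra.
Set Implicit Arguments. Unset Strict Implicit. Unset Printing Implicit Defensive.
Import Order.TTheory GRing.Theory Num.Theory.
Local Open Scope ring_scope.

(* Skeletal data of a multiplicity-free fusion category with self-dual simples,
   over a numeric algebraically closed field C (e.g. the complex numbers).
   F^{abc}_{d;ef} is written  F a b c d e f : it is the matrix coefficient of the
   F-move between the fusion trees ((a b)_f c)_d and (a (b c)_e)_d; it is only
   meaningful when N b c e, N a e d, N a b f, N f c d hold. *)
Record fusion_data (C : numClosedFieldType) := FusionData {
  lab : finType;                          (* Irr(C) *)
  lone : lab;
  N : lab -> lab -> lab -> bool;          (* N a b c : (a,b,c) admissible *)
  qd : lab -> C;
  F : lab -> lab -> lab -> lab -> lab -> lab -> C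
}.

Section UFC.
Variable C : numClosedFieldType.
Variable D : fusion_data C.
Local Notation L := (@lab C D).
Local Notation N := (@N C D).
Local Notation d := (@qd C D).
Local Notation F := (@F C D).
Local Notation one := (@lone C D).

(* Axioms of a unitary, multiplicity-free fusion category whose simples are
   self-dual with trivial Frobenius-Schur indicators, with unitary F-matrices and
   theta symbols normalised as theta(a,b,c) = sqrt(d_a d_b d_c). *)
Record UFC_axioms : Prop := {
  (* fusion rules: unit, self-duality (full symmetry of N), associativity *)
  N_unit : forall a b, N one a b = (a == b);
  N_sym12 : forall a b c, N a b c = N b a c;
  N_sym23 : forall a b c, N a b c = N a c b;
  N_assoc : forall a b c x,
    (\sum_(e | N a b e && N e c x) 1 = \sum_(f | N b c f && N a f x) 1)%N;
  qd_pos : forall a, 0 < d a;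
  qd_one : d one = 1;
  qd_fusion : forall a b, d a * d b = \sum_c (N a b c)%:R * d c;
  F_pentagon : forall a b c dd x f g h k,
    N a b f -> N f c g -> N g dd x -> N c dd h -> N b h k -> N a k x ->
    F f c dd x h g * F a b h x k f =
    \sum_(l | [&& N b c l, N a l g & N l dd k])
       F a b c g l f * F a l dd x k g * F b c dd k h l;
  F_unitary_rows : forall a b c dd e e',
    N b c e -> N a e dd -> N b c e' -> N a e' dd ->
    \sum_(f | N a b f && N f c dd) F a b c dd e f * (F a b c dd e' f)^* = (e == e')%:R;
  F_unitary_cols : forall a b c dd f f',
    N a b f -> N f c dd -> N a b f' -> N f' c dd ->
    \sum_(e | N b c e && N a e dd) F a b c dd e f * (F a b c dd e f')^* = (f == f')%:R;
  F_one1 : forall b c dd, N b c dd -> F one b c dd dd b = 1;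
  F_one2 : forall a c dd, N a c dd -> F a one c dd c a = 1;
  F_one3 : forall a b dd, N a b dd -> F a b one dd b dd = 1;
  (* F-symbols with a trivial internal channel (consequence of trivial FS
     indicators and theta(a,b,c) = sqrt(d_a d_b d_c)) *)
  F_vac1 : forall x y v, N x y v ->
    F x y y x one v = sqrtC (d v) / (sqrtC (d x) * sqrtC (d y));
  F_vac2 : forall x z u, N x z u ->
    F x x z z u one = sqrtC (d u) / (sqrtC (d x) * sqrtC (d z))
}.

(* basis vector e^{ab}_{i;cd} is indexed by the tuple (a,b,i,c,d) with
   Hom(b, a (x) i) and Hom(i (x) d, c) nonzero *)
Local Notation tup5 := (L * L * L * L * L)%type.
Definition adm5 (t : tup5) : bool :=
  let: (a, b, i, c, dd) := t in N a i b && N i dd c.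
Definition Hbasis : finType := {t : tup5 | adm5 t}.
Definition HC := {ffun Hbasis -> C^o}.

Definition ebas (β : Hbasis) : HC := [ffun γ => (γ == β)%:R].

Definition mulB (β β' : Hbasis) : HC :=
  let: (a, b, i, c, dd) := val β in
  let: (a', b', i', c', d') := val β' in
  if [&& c == a', dd == b' & i == i'] then
    [ffun γ : Hbasis => (val γ == (a, b, i, c', d'))%:R / sqrtC (d i)]
  else 0.
Definition mulH (x y : HC) : HC :=
  \sum_(β : Hbasis) \sum_(β' : Hbasis) (x β * y β') *: mulB β β'.

Definition etaH : HC :=
  [ffun β : Hbasis => let: (a, b, i, c, dd) := val β in
     if (c == a) && (dd == b) then sqrtC (d i) else 0].

Definition epsB (β : Hbasis) : C :=
  let: (a, b, i, c, dd) := val β in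
  ((a == b) && (c == dd) && (i == one))%:R.
Definition epsH (x : HC) : C := \sum_(β : Hbasis) x β * epsB β.

(* comultiplication, an element of HC (x) HC written in the basis
   e_g1 (x) e_g2, i.e. as a coefficient function on pairs of basis vectors *)
Definition DeltaB (β : Hbasis) : {ffun Hbasis * Hbasis -> C} :=
  [ffun g : Hbasis * Hbasis =>
    let: (a, b, i, c, dd) := val β in
    let: (a1, p, j, c1, q) := val g.1 in
    let: (p2, b2, k, q2, d2) := val g.2 in
    if [&& a1 == a, c1 == c, p2 == p, q2 == q, b2 == b, d2 == dd & N j k i] then
      sqrtC (d j) * sqrtC (d k) / sqrtC (d i) * F a j k b i p * F dd k j c i q
    else 0].
Definition DeltaH (x : HC) : {ffun Hbasis * Hbasis -> C} :=
  [ffun g => \sum_(β : Hbasis) x β * DeltaB β g].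

Definition eps_t (h : HC) : HC :=
  \sum_(g : Hbasis * Hbasis)
     (DeltaH etaH g * epsH (mulH (ebas g.1) h)) *: ebas g.2.

Definition Ht : {vspace HC} := <<[seq eps_t (ebas β) | β <- enum Hbasis]>>%VS.

(* H_C-action on H_t (tensor unit of Rep(H_C)) *)
Definition act_t (h z : HC) : HC := eps_t (mulH h z).

Definition wvec (a : L) : HC :=
  [ffun β : Hbasis => let: (a', b, k, c, dd) := val β in
     if [&& a' == a, c == a & dd == b] then sqrtC (d k) / sqrtC (d a) else 0].

Definition Vbasis (i : L) : finType := {p : L * L | N i p.1 p.2}.
Definition Vmod (i : L) := {ffun Vbasis i -> C^o}.

Definition actB (i : L) (β : Hbasis) (γ : Vbasis i) : Vmod i :=
  let: (a, b, j, c, dd) := val β in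
  let: (p, q) := val γ in
  if [&& j == i, c == p & dd == q] then
    [ffun δ : Vbasis i => (val δ == (a, b))%:R / sqrtC (d i)]
  else 0.
Definition actV (i : L) (x : HC) (v : Vmod i) : Vmod i :=
  \sum_(β : Hbasis) \sum_(γ : Vbasis i) (x β * v γ) *: actB β γ.

End UFC.

Arguments wvec {C} D a.
Arguments Vmod {C} D i.
Arguments act_t {C} D h z.
Arguments actV {C} D i x v.

(* Main.v *)
Require Import Defs.
From HB Require Import structures.
From mathcomp Require Import all_boot all_order all_algebra.
From mathcomp Require Import ring.
Import GRing.Theory Num.Theory.
Local Open Scope ring_scope.
Set Implicit Arguments. Unset Strict Implicit. Unset Printing Implicit Defensive.

Lemma sum_sig_delta (R : pzSemiRingType) (T : finType) (P : pred T) (t : T) (F : T -> R) :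
  \sum_(x : {x : T | P x}) (val x == t)%:R * F (val x) = (P t)%:R * F t.
Proof.
case: (boolP (P t)) => Pt.
  rewrite (bigD1 (exist _ t Pt)) //= eqxx mul1r big1 ?addr0 // => x ne.
  case: eqP => [e|]; last by rewrite mul0r.
  by case/eqP: ne; apply: val_inj.
rewrite mul0r big1 // => x _; case: eqP => [e|]; last by rewrite mul0r.
by case/negP: Pt; rewrite -e (valP x).
Qed.

Definition matchB C (D : fusion_data C) a (β : Hbasis D) : bool :=
  let: (a',b',i',c',d') := val β in [&& a'==a, b'==a, i'==lone D & c'==d'].
Definition Sc C (D : fusion_data C) a (h : HC D) : C := \sum_(β | matchB a β) h β.

Lemma Nunit1 C (D : fusion_data C) (HD : UFC_axioms D) a b : N a (lone D) b = (a == b).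
Proof. by rewrite N_sym12 // N_unit. Qed.
Lemma Nunit2 C (D : fusion_data C) (HD : UFC_axioms D) a b : N a b (lone D) = (a == b).
Proof. by rewrite N_sym23 // N_sym12 // N_unit. Qed.

Lemma Sc_wvec C (D : fusion_data C) (HD : UFC_axioms D) x a :
  Sc x (wvec D a) = (x == a)%:R / sqrtC (qd a).
Proof.
rewrite /Sc big_mkcond /=.
rewrite (eq_bigr (fun β => (val β == (x,x,lone D,x,x))%:R * ((x == a)%:R / sqrtC (qd a)))).
  rewrite (sum_sig_delta _ _ (fun _ => (x == a)%:R / sqrtC (qd a))) /=.
  by rewrite N_unit // Nunit1 // !eqxx mul1r.
case=> [[[[[a' b'] i'] c'] d'] /= Hb] _; rewrite /matchB /= ffunE /= !xpair_eqE.
move: Hb; do ! (case: eqP => //= ?; subst); rewrite ?N_unit ?Nunit1 //;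
  try by rewrite ?mul0r ?mul1r ?qd_one ?sqrtC1 ?mul1r.
Qed.

Lemma sum_only (R : nmodType) (I : finType) (i0 : I) (F : I -> R) :
  (forall i, i != i0 -> F i = 0) -> \sum_i F i = F i0.
Proof. by move=> H; rewrite (bigD1 i0) //= big1 ?addr0 // => i /H. Qed.

Lemma scaleO (C : numClosedFieldType) (k x : C^o) : k *: x = k * x.
Proof. by []. Qed.

Definition Mx C (D : fusion_data C) (g1 β' : Hbasis D) : C :=
  let: (a,b,i,c,dd) := val g1 in let: (a',b',i',c',d') := val β' in
  ([&& c==a', dd==b', i==i', a==b, c'==d' & i==lone D])%:R.

Definition epsT C (D : fusion_data C) (t : lab D * lab D * lab D * lab D * lab D) : C :=
  let: (a, b, i, c, dd) := t in ((a == b) && (c == dd) && (i == lone D))%:R.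

Lemma Mx_sum C (D : fusion_data C) (HD : UFC_axioms D) (g1 β' : Hbasis D) :
  \sum_γ mulB g1 β' γ * epsB γ = Mx g1 β'.
Proof.
case: g1 => [[[[[a b] i] c] dd] /= Hg]; case: β' => [[[[[a' b'] i'] c'] d'] /= Hb].
rewrite /mulB /Mx /=.
have Z : \sum_(γ : Hbasis D) (0 : HC D) γ * epsB γ = 0 by rewrite big1 // => γ _; rewrite ffunE mul0r.
case: eqP => [?|]; last by rewrite Z. subst.
case: eqP => [?|]; last by rewrite Z. subst.
case: eqP => [?|]; last by rewrite Z. subst.
rewrite /=.
rewrite (eq_bigr (fun γ => (val γ == (a,b,i',c',d'))%:R * (epsT (a,b,i',c',d') / sqrtC (qd i')))).
  rewrite (sum_sig_delta _ _ (fun _ => (epsT (a,b,i',c',d') / sqrtC (qd i')))) /=.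
  move: Hg Hb => /andP[Hab _] /andP[_ Hdc]; rewrite Hab Hdc mul1r.
  case: (a == b); case: (c' == d') => /=; rewrite ?mul0r //.
  by case: eqP => [->|]; rewrite ?mul0r // qd_one // sqrtC1 divr1.
case=> [t Ht] _ /=; rewrite ffunE /= (_ : epsB _ = epsT t) //.
case: eqP => [->|_]; last by rewrite !mul0r.
by rewrite /= !mul1r mulrC.
Qed.

Lemma mulH_ebas C (D : fusion_data C) (g1 : Hbasis D) (h : HC D) γ :
  (mulH (ebas g1) h) γ = \sum_β' h β' * mulB g1 β' γ.
Proof.
rewrite /mulH sum_ffunE (@sum_only _ _ g1) => [|β ne].
  rewrite sum_ffunE; apply: eq_bigr => β' _.
  by rewrite ffunE scaleO ffunE eqxx mul1r.
rewrite sum_ffunE big1 // => β' _.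
by rewrite ffunE scaleO ffunE (negbTE ne) mul0r mul0r.
Qed.

Lemma epsmul C (D : fusion_data C) (HD : UFC_axioms D) (g1 : Hbasis D) (h : HC D) :
  epsH (mulH (ebas g1) h) = \sum_β' h β' * Mx g1 β'.
Proof.
rewrite /epsH.
under eq_bigr => γ _ do rewrite mulH_ebas mulr_suml.
rewrite exchange_big /=; apply: eq_bigr => β' _.
rewrite -Mx_sum // mulr_sumr; apply: eq_bigr => γ _.
by rewrite mulrA.
Qed.

Lemma term_K C (D : fusion_data C) (HD : UFC_axioms D) a0 b k c dd
   (Hγ : adm5 (a0,b,k,c,dd)) (g1 β β' : Hbasis D) :
  etaH D β * DeltaB β (g1, exist _ (a0,b,k,c,dd) Hγ) * Mx g1 β' =
  (val g1 == (a0,a0,lone D,a0,a0))%:R * ((val β == (a0,b,k,a0,b))%:R *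
    ([&& c == a0, dd == b & matchB a0 β']%:R * sqrtC (qd k))).
Proof.
case: g1 => [[[[[a1 p] j] c1] q] /= Hg]; case: β => [[[[[x y] i] u] v] /= Hb].
case: β' => [[[[[a' b'] i'] c'] d'] /= Hb'].
rewrite /etaH /DeltaB /Mx /matchB !ffunE /= !xpair_eqE.
move: Hγ Hg Hb Hb'; rewrite /adm5.
rewrite [X in X = _]mulrC.
do ! (rewrite ?N_unit ?Nunit1 ?Nunit2 //=; try (by move=> *; rewrite ?andbF ?mul0r ?mulr0);
  case: eqP => //= ?; subst); rewrite ?mul0r ?mulr0 //.
all: try by move=> *; rewrite ?mul0r ?mulr0.
move=> /andP[H1 H2] _ _ _.
have s0 : sqrtC (qd i) != 0 by rewrite sqrtC_eq0 lt0r_neq0 ?qd_pos.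
have H3 : N y i x by rewrite N_sym12.
rewrite qd_one // sqrtC1 mul1r divff // F_one2 // F_one3 //.
by rewrite !mul1r !mulr1.
Qed.


Lemma sum_sig_delta_c (R : pzSemiRingType) (T : finType) (P : pred T) (t : T) (c : R) :
  \sum_(x : {x : T | P x}) (val x == t)%:R * c = (P t)%:R * c.
Proof. exact: (sum_sig_delta P t (fun _ => c)). Qed.

Lemma true_R (R : pzSemiRingType) : (true%:R : R) = 1. Proof. by []. Qed.

Lemma dbl_delta (R : comPzRingType) (T1 T2 : finType) (P1 : pred T1) (P2 : pred T2) t1 t2 (y x : R) :
  \sum_(g1 : {x : T1 | P1 x}) \sum_(β : {x : T2 | P2 x})
     y * ((val g1 == t1)%:R * ((val β == t2)%:R * x)) =
  (P1 t1)%:R * ((P2 t2)%:R * (y * x)).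
Proof.
transitivity (\sum_(g1 : {x : T1 | P1 x}) (val g1 == t1)%:R *
   \sum_(β : {x : T2 | P2 x}) (val β == t2)%:R * (y * x)).
  apply: eq_bigr => g1 _; rewrite mulr_sumr; apply: eq_bigr => β _.
  by rewrite mulrCA; congr (_ * _); rewrite mulrCA.
by rewrite sum_sig_delta_c sum_sig_delta_c.
Qed.

Lemma eps_t_pt C (D : fusion_data C) (h : HC D) γ :
  (eps_t h) γ = \sum_g1 DeltaH (etaH D) (g1, γ) * epsH (mulH (ebas g1) h).
Proof.
rewrite /eps_t sum_ffunE.
transitivity (\sum_g1 \sum_g2 ((DeltaH (etaH D) (g1,g2) * epsH (mulH (ebas g1) h)) *: ebas g2) γ).
  by rewrite pair_bigA; apply: eq_bigr; case.
apply: eq_bigr => g1 _.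
rewrite (@sum_only _ _ γ) => [|g2 ne]; first by rewrite !ffunE eqxx scaleO mulr1.
by rewrite !ffunE eq_sym (negbTE ne) scaleO mulr0.
Qed.

Lemma sqd_neq0 C (D : fusion_data C) (HD : UFC_axioms D) (a : lab D) : sqrtC (qd a) != 0.
Proof. by rewrite sqrtC_eq0 lt0r_neq0 ?qd_pos. Qed.

Lemma eps_tE C (D : fusion_data C) (HD : UFC_axioms D) (h : HC D) :
  eps_t h = \sum_a (sqrtC (qd a) * Sc a h) *: wvec D a.
Proof.
apply/ffunP => γ; rewrite eps_t_pt sum_ffunE.
case: γ => [[[[[a0 b] k] c] dd] Hγ].
have Hγ' : adm5 (a0,b,k,a0,b).
  by move: Hγ => /andP[H1 _]; rewrite /adm5 H1 /= N_sym23 // N_sym12.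
have Ht1 : adm5 (a0,a0,lone D,a0,a0) by rewrite /adm5 Nunit1 // N_unit // !eqxx.
transitivity (\sum_g1 \sum_β \sum_β' h β' * (etaH D β * DeltaB β (g1, exist _ (a0,b,k,c,dd) Hγ) * Mx g1 β')).
  apply: eq_bigr => g1 _; rewrite epsmul // ffunE mulr_suml; apply: eq_bigr => β _.
  by rewrite mulr_sumr; apply: eq_bigr => β' _; rewrite mulrCA.
under eq_bigr => g1 _ do rewrite exchange_big.
rewrite exchange_big /=.
under eq_bigr => β' _ do (under eq_bigr => g1 _ do (under eq_bigr => β _ do rewrite term_K //)).
under eq_bigr => β' _ do rewrite dbl_delta.
rewrite Ht1 Hγ'; under eq_bigr => β' _ do rewrite true_R !mul1r.
rewrite (@sum_only _ _ a0) => [|a ne]; last first.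
  by rewrite !ffunE /= eq_sym (negbTE ne) /= scaleO mulr0.
rewrite !ffunE /= eqxx /= scaleO /Sc.
case: eqP => [_|_] /=; last by rewrite mulr0 big1 // => i _; rewrite mul0r mulr0.
case: eqP => [_|_] /=; last by rewrite mulr0 big1 // => i _; rewrite mul0r mulr0.
have -> : forall S : C, sqrtC (qd a0) * S * (sqrtC (qd k) / sqrtC (qd a0)) = S * sqrtC (qd k).
  by move=> S; have := sqd_neq0 HD a0; move=> ?; field.
rewrite [in RHS]big_mkcond [in RHS]mulr_suml; apply: eq_bigr => β _.
by case: (matchB a0 β); rewrite ?mul0r ?mulr0 ?mul1r.
Qed.

Lemma Sc_lin C (D : fusion_data C) (a : lab D) (k : C) (f g : HC D) :
  Sc a (k *: f + g) = k * Sc a f + Sc a g.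
Proof.
rewrite /Sc mulr_sumr -big_split /=; apply: eq_bigr => β _.
by rewrite !ffunE scaleO.
Qed.

Lemma eps_t_lin C (D : fusion_data C) (HD : UFC_axioms D) (k : C) (f g : HC D) :
  eps_t (k *: f + g) = k *: eps_t f + eps_t g.
Proof.
rewrite !eps_tE // scaler_sumr -big_split /=; apply: eq_bigr => a _.
by rewrite Sc_lin scalerA -scalerDl mulrDr mulrCA.
Qed.

Definition phif C (D : fusion_data C) (f : HC D) : Vmod D (lone D) :=
  [ffun γ => Sc (val γ).1 f].

Lemma phif_lin C (D : fusion_data C) : linear (@phif C D).
Proof. by move=> k f g; apply/ffunP => γ; rewrite !ffunE Sc_lin. Qed.

HB.instance Definition _ C (D : fusion_data C) :=
  GRing.isLinear.Build C (HC D) (Vmod D (lone D)) _ (@phif C D) (@phif_lin C D).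

Lemma Sc_ebas C (D : fusion_data C) (x : lab D) (β : Hbasis D) :
  Sc x (ebas β) = (matchB x β)%:R.
Proof.
rewrite /Sc big_mkcond (@sum_only _ _ β) => [|β' ne]; first by rewrite ffunE eqxx; case: matchB.
by rewrite ffunE (negbTE ne); case: matchB.
Qed.

Definition bdiag C (D : fusion_data C) (HD : UFC_axioms D) (a : lab D) : Hbasis D :=
  exist _ (a,a,lone D,a,a) (etrans (congr2 andb (Nunit1 HD a a) (N_unit HD a a)) (congr2 andb (eqxx a) (eqxx a))).

Lemma lin_sum (K : fieldType) (V W : vectType K) (f : V -> W) :
  (forall k x y, f (k *: x + y) = k *: f x + f y) ->
  forall I (r : seq I) (c : I -> K) (x : I -> V),
  f (\sum_(i <- r) c i *: x i) = \sum_(i <- r) c i *: f (x i).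
Proof.
move=> lf I r c x; elim: r => [|i r IH].
  rewrite !big_nil; have := lf 1 0 0; rewrite scaler0 addr0 scale1r.
  by move/(congr1 (fun v => v - f 0)); rewrite subrr addrK => ->.
by rewrite !big_cons lf IH.
Qed.

Lemma span_ext (K : fieldType) (V W : vectType K) (X : seq V) (f g : V -> W) :
  (forall k x y, f (k *: x + y) = k *: f x + f y) ->
  (forall k x y, g (k *: x + y) = k *: g x + g y) ->
  (forall x, x \in X -> f x = g x) -> forall z, z \in <<X>>%VS -> f z = g z.
Proof.
move=> lf lg fg z; rewrite -[X]/(tval (in_tuple X)) => /coord_span ->.
rewrite !lin_sum //; apply: eq_bigr => i _; rewrite fg //.
exact: mem_nth.
Qed.

Lemma Sc_sum C (D : fusion_data C) (a : lab D) I (r : seq I) (g : I -> HC D) :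
  Sc a (\sum_(i <- r) g i) = \sum_(i <- r) Sc a (g i).
Proof.
rewrite /Sc; under eq_bigr => β _ do rewrite sum_ffunE.
by rewrite exchange_big.
Qed.

Lemma Sc_scale C (D : fusion_data C) (a : lab D) (k : C) (f : HC D) :
  Sc a (k *: f) = k * Sc a f.
Proof. by rewrite /Sc mulr_sumr; apply: eq_bigr => β _; rewrite ffunE scaleO. Qed.

Lemma Sc_eps C (D : fusion_data C) (HD : UFC_axioms D) (p : lab D) (f : HC D) :
  Sc p (eps_t f) = Sc p f.
Proof.
rewrite eps_tE // Sc_sum (@sum_only _ _ p) => [|a ne]; last first.
  by rewrite Sc_scale Sc_wvec // eq_sym (negbTE ne) mul0r mulr0.
rewrite Sc_scale Sc_wvec // eqxx mul1r mulrC mulrA mulVf ?mul1r //.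
exact: sqd_neq0.
Qed.

Lemma phif_eps C (D : fusion_data C) (HD : UFC_axioms D) (f : HC D) :
  phif (eps_t f) = phif f.
Proof. by apply/ffunP => γ; rewrite !ffunE Sc_eps. Qed.

Lemma eps_t_wvec C (D : fusion_data C) (HD : UFC_axioms D) (a : lab D) :
  eps_t (wvec D a) = wvec D a.
Proof.
rewrite eps_tE // (@sum_only _ _ a) => [|x ne]; last first.
  by rewrite Sc_wvec // (negbTE ne) mul0r mulr0 scale0r.
rewrite Sc_wvec // eqxx mul1r mulfV ?scale1r //.
exact: sqd_neq0.
Qed.

Lemma eps_t_diag C (D : fusion_data C) (HD : UFC_axioms D) (a : lab D) :
  eps_t (ebas (bdiag HD a)) = sqrtC (qd a) *: wvec D a.
Proof.
rewrite eps_tE // (@sum_only _ _ a) => [|x ne]; last first.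
  by rewrite Sc_ebas /matchB /= eq_sym (negbTE ne) mulr0 scale0r.
by rewrite Sc_ebas /matchB /= !eqxx mulr1.
Qed.

Lemma eps_t_in C (D : fusion_data C) (HD : UFC_axioms D) (h : HC D) :
  eps_t h \in <<[seq wvec D a | a <- enum (lab D)]>>%VS.
Proof.
rewrite eps_tE //; apply: memv_suml => a _; apply: memvZ; apply: memv_span.
by apply: map_f; rewrite mem_enum.
Qed.

Lemma Ht_eq C (D : fusion_data C) (HD : UFC_axioms D) :
  Ht D = <<[seq wvec D a | a <- enum (lab D)]>>%VS.
Proof.
apply/eqP; rewrite eqEsubv; apply/andP; split.
  by apply/span_subvP => x /mapP[β _ ->]; exact: eps_t_in.
apply/span_subvP => x /mapP[a _ ->].
have -> : wvec D a = (sqrtC (qd a))^-1 *: eps_t (ebas (bdiag HD a)).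
  by rewrite eps_t_diag scalerA mulVf ?scale1r ?sqd_neq0.
apply: memvZ; apply: memv_span; apply: map_f; exact: mem_enum.
Qed.

Lemma eps_t_fix C (D : fusion_data C) (HD : UFC_axioms D) (z : HC D) :
  z \in Ht D -> eps_t z = z.
Proof.
rewrite Ht_eq // => zin.
apply: (@span_ext C (HC D) (HC D) _ (@eps_t C D) (fun x => x) _ _ _ z zin).
- exact: eps_t_lin.
- by [].
- by move=> x /mapP[a _ ->]; rewrite eps_t_wvec.
Qed.

Lemma term_L3 C (D : fusion_data C) (HD : UFC_axioms D) (y a : lab D) (β0 β1 β2 : Hbasis D) :
  (matchB y β0)%:R * (wvec D a β2 * mulB β1 β2 β0) =
  (val β1 == (y,y,lone D,a,a))%:R * ((val β0 == (y,y,lone D,a,a))%:R *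
    ((val β2 == (a,a,lone D,a,a))%:R * (sqrtC (qd a))^-1)).
Proof.
case: β0 => [[[[[a0 b0] i0] c0] d0] /= H0]; case: β1 => [[[[[a1 b1] i1] c1] d1] /= H1].
case: β2 => [[[[[a2 b2] i2] c2] d2] /= H2].
rewrite /matchB /mulB /= !ffunE /= !xpair_eqE.
have H0' := H0; move: H0' H1 H2; rewrite /adm5.
do ! (rewrite ?ffunE ?xpair_eqE ?N_unit ?Nunit1 ?Nunit2 //=;
  try (match goal with H : ?x <> ?x |- _ => by case: H end); try (by move=> *; rewrite ?andbF ?mul0r ?mulr0);
  case: eqP => //= ?; subst); rewrite ?mul0r ?mulr0 //.
all: try by move=> *; rewrite ?mul0r ?mulr0.
by move=> *; rewrite qd_one // sqrtC1 invr1 !mul1r !mulr1.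
Qed.

Definition T C (D : fusion_data C) (h : HC D) t : C := \sum_(β | val β == t) h β.

Lemma T_delta C (D : fusion_data C) (h : HC D) t (c : C) :
  \sum_β h β * ((val β == t)%:R * c) = T h t * c.
Proof.
rewrite /T [in RHS]big_mkcond [in RHS]mulr_suml; apply: eq_bigr => β _.
by case: eqP => _; rewrite ?mul0r ?mulr0 ?mul1r.
Qed.

Lemma mulH_lin C (D : fusion_data C) (h : HC D) (k : C) (f g : HC D) :
  mulH h (k *: f + g) = k *: mulH h f + mulH h g.
Proof.
rewrite /mulH scaler_sumr -big_split; apply: eq_bigr => β _ /=.
rewrite scaler_sumr -big_split; apply: eq_bigr => β' _ /=.
by rewrite !ffunE scaleO scalerA -scalerDl mulrDr mulrCA.
Qed.

Lemma actV_lin C (D : fusion_data C) i (h : HC D) (k : C) (v w : Vmod D i) :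
  actV D i h (k *: v + w) = k *: actV D i h v + actV D i h w.
Proof.
rewrite /actV scaler_sumr -big_split; apply: eq_bigr => β _ /=.
rewrite scaler_sumr -big_split; apply: eq_bigr => γ _ /=.
by rewrite !ffunE scaleO scalerA -scalerDl mulrDr mulrCA.
Qed.

Lemma Sc_mulH_wvec C (D : fusion_data C) (HD : UFC_axioms D) (h : HC D) (y a : lab D) :
  Sc y (mulH h (wvec D a)) = T h (y,y,lone D,a,a) / sqrtC (qd a).
Proof.
rewrite /Sc big_mkcond /=.
transitivity (\sum_β1 h β1 * \sum_β0 \sum_β2 (matchB y β0)%:R * (wvec D a β2 * mulB β1 β2 β0)).
  transitivity (\sum_β0 \sum_β1 \sum_β2 h β1 * ((matchB y β0)%:R * (wvec D a β2 * mulB β1 β2 β0))).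
    apply: eq_bigr => β0 _; rewrite /mulH sum_ffunE.
    case: (matchB y β0).
      apply: eq_bigr => β1 _; rewrite sum_ffunE; apply: eq_bigr => β2 _.
      by rewrite ffunE scaleO mul1r mulrA.
    by rewrite big1 // => β1 _; rewrite big1 // => β2 _; rewrite mul0r mulr0.
  rewrite exchange_big; apply: eq_bigr => β1 _; rewrite mulr_sumr; apply: eq_bigr => β0 _.
  by rewrite mulr_sumr.
under eq_bigr => β1 _ do (under eq_bigr => β0 _ do (under eq_bigr => β2 _ do rewrite term_L3 //)).
under eq_bigr => β1 _ do rewrite dbl_delta.
have Ht0 : adm5 (y,y,lone D,a,a) by rewrite /adm5 Nunit1 // N_unit // !eqxx.
have Ht2 : adm5 (a,a,lone D,a,a) by rewrite /adm5 Nunit1 // N_unit // !eqxx.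
rewrite Ht0 Ht2; under eq_bigr => β1 _ do rewrite true_R !mul1r.
by rewrite T_delta.
Qed.

Lemma actB_one C (D : fusion_data C) (HD : UFC_axioms D) (β : Hbasis D) (γ' γ : Vbasis (lone D)) :
  actB β γ' γ = (val β == ((val γ).1, (val γ).2, lone D, (val γ').1, (val γ').2))%:R.
Proof.
case: β => [[[[[a b] j] c] dd] /= Hb]; case: γ' => [[p' q'] /= H']; case: γ => [[p q] /= H].
rewrite /actB /= !xpair_eqE.
have H0 := H; move: H0.
do ! (rewrite ?ffunE ?xpair_eqE ?N_unit ?Nunit1 ?Nunit2 //=;
  try (match goal with H : ?x <> ?x |- _ => by case: H end);
  case: eqP => //= ?; subst).
all: try by move=> *; rewrite ?mul0r ?mulr0.
all: by move=> *; rewrite qd_one // sqrtC1 invr1 ?mulr1.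
Qed.

Lemma actV_pt C (D : fusion_data C) (HD : UFC_axioms D) (h : HC D) (v : Vmod D (lone D)) γ :
  actV D (lone D) h v γ =
  \sum_γ' v γ' * T h ((val γ).1, (val γ).2, lone D, (val γ').1, (val γ').2).
Proof.
rewrite /actV sum_ffunE.
under eq_bigr => β _ do (rewrite sum_ffunE; under eq_bigr => γ' _ do rewrite ffunE scaleO actB_one //).
rewrite exchange_big /=; apply: eq_bigr => γ' _.
rewrite mulrC -T_delta; apply: eq_bigr => β _.
by rewrite mulrCA mulrC.
Qed.

Definition vdiag C (D : fusion_data C) (HD : UFC_axioms D) (a : lab D) : Vbasis (lone D) :=
  exist (fun p : lab D * lab D => N (lone D) p.1 p.2) (a, a) (etrans (N_unit HD a a) (eqxx a)).

Lemma vbasis_eq C (D : fusion_data C) (HD : UFC_axioms D) (γ : Vbasis (lone D)) :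
  γ = vdiag HD (val γ).1.
Proof.
case: γ => [[p q] H]; apply: val_inj => /=.
by move: H; rewrite /= N_unit // => /eqP ->.
Qed.

Lemma intertw_w C (D : fusion_data C) (HD : UFC_axioms D) (h : HC D) (a : lab D) :
  phif (mulH h (wvec D a)) = actV D (lone D) h (phif (wvec D a)).
Proof.
apply/ffunP => γ; rewrite ffunE Sc_mulH_wvec // actV_pt //.
rewrite (@sum_only _ _ (vdiag HD a)) => [|γ' ne]; last first.
  rewrite ffunE Sc_wvec //; case: eqP => [e|]; last by rewrite !mul0r.
  by case/eqP: ne; rewrite (vbasis_eq HD γ') e.
rewrite ffunE Sc_wvec //= eqxx mul1r mulrC.
by rewrite [in RHS](vbasis_eq HD γ).
Qed.

Lemma intertw_Ht C (D : fusion_data C) (HD : UFC_axioms D) (h : HC D) (z : HC D) :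
  z \in Ht D -> phif (mulH h z) = actV D (lone D) h (phif z).
Proof.
rewrite Ht_eq // => zin.
apply: (@span_ext C (HC D) (Vmod D (lone D)) _ (fun z => phif (mulH h z))
          (fun z => actV D (lone D) h (phif z)) _ _ _ z zin).
- by move=> k x y; rewrite mulH_lin phif_lin.
- by move=> k x y; rewrite phif_lin actV_lin.
- by move=> x /mapP[a _ ->]; rewrite intertw_w.
Qed.

Lemma T_ebas C (D : fusion_data C) (β : Hbasis D) t : T (ebas β) t = (val β == t)%:R.
Proof.
rewrite /T big_mkcond (@sum_only _ _ β) => [|β' ne]; first by rewrite ffunE eqxx; case: eqP.
by rewrite ffunE (negbTE ne); case: eqP.
Qed.

Lemma adm_xa C (D : fusion_data C) (HD : UFC_axioms D) (x a : lab D) : adm5 (x,x,lone D,a,a).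
Proof. by rewrite /adm5 Nunit1 // N_unit // !eqxx. Qed.

Definition bx C (D : fusion_data C) (HD : UFC_axioms D) (x a : lab D) : Hbasis D :=
  exist _ (x,x,lone D,a,a) (adm_xa HD x a).

Lemma Sc0 C (D : fusion_data C) (a : lab D) : Sc a (0 : HC D) = 0.
Proof. by rewrite /Sc big1 // => β _; rewrite ffunE. Qed.

Lemma act_bx C (D : fusion_data C) (HD : UFC_axioms D) (x a0 : lab D) (z : HC D) :
  z \in Ht D -> act_t D (ebas (bx HD x a0)) z = (sqrtC (qd x) * Sc a0 z) *: wvec D x.
Proof.
move=> zH.
have E y : Sc y (mulH (ebas (bx HD x a0)) z) = (y == x)%:R * Sc a0 z.
  have := congr1 (fun f : Vmod D (lone D) => f (vdiag HD y)) (intertw_Ht HD (ebas (bx HD x a0)) zH).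
  rewrite !ffunE /= actV_pt //= => ->.
  rewrite (@sum_only _ _ (vdiag HD a0)) => [|γ' ne]; last first.
    rewrite T_ebas /=; case: eqP => [e|]; last by rewrite mulr0.
    case/eqP: ne; rewrite (vbasis_eq HD γ'); congr vdiag.
    by move/(congr1 (fun t => t.1.2)): e => /= <-.
  rewrite ffunE T_ebas /= !xpair_eqE !eqxx !andbT andbb eq_sym mulrC.
  by [].
rewrite /act_t eps_tE // (@sum_only _ _ x) => [|y ne]; last first.
  by rewrite E (negbTE ne) mul0r mulr0 scale0r.
by rewrite E eqxx mul1r.
Qed.

Unset Implicit Arguments.

Theorem mainTheorem10 (C : numClosedFieldType) (D : fusion_data C) :
  UFC_axioms D ->
  [/\ (* H_t is spanned by the vectors sum_{k,b} sqrt(d_k)/sqrt(d_a) e^{ab}_{k;ab} *)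
      Ht D = <<[seq wvec D a | a <- enum (lab D)]>>%VS,
      (* dim H_t = dim V_1 *)
      \dim (Ht D) = \dim (fullv : {vspace Vmod D (lone D)}),
      (* H_t and V_1 are isomorphic H_C-modules *)
      (exists phi : 'Hom(HC D, Vmod D (lone D)),
         [/\ (phi @: Ht D)%VS = fullv,
             (lker phi :&: Ht D)%VS = 0%VS &
             forall h z, z \in Ht D ->
               phi (act_t D h z) = actV D (lone D) h (phi z)]) &
      (* the tensor unit H_t of Rep(H_C) is a simple module *)
      (Ht D != 0%VS /\
       forall U : {vspace HC D}, (U <= Ht D)%VS ->
         (forall h z, z \in U -> act_t D h z \in U) ->
         U = 0%VS \/ U = Ht D)].
Proof.
move=> HD.
have HtE := Ht_eq HD.
pose phi : 'Hom(HC D, Vmod D (lone D)) := linfun (@phif C D).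
have phiE z : phi z = phif z by rewrite lfunE.
have img : (phi @: Ht D)%VS = fullv.
  apply/eqP; rewrite eqEsubv subvf /=; apply/subvP => v _.
  have -> : v = \sum_γ v γ *: phi (sqrtC (qd (val γ).1) *: wvec D (val γ).1).
    apply/ffunP => γ0; rewrite sum_ffunE (@sum_only _ _ γ0) => [|γ ne].
      rewrite ffunE scaleO phiE ffunE Sc_scale Sc_wvec // eqxx mul1r mulfV ?mulr1 //.
      exact: sqd_neq0.
    rewrite ffunE scaleO phiE ffunE Sc_scale Sc_wvec //.
    case: eqP => [e|]; last by rewrite mul0r mulr0 mulr0.
    by case/eqP: ne; rewrite (vbasis_eq HD γ) (vbasis_eq HD γ0) e.
  apply: memv_suml => γ _; apply: memvZ; apply: memv_img; rewrite HtE.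
  apply: memvZ; apply: memv_span; apply: map_f; exact: mem_enum.
have ker : (lker phi :&: Ht D)%VS = 0%VS.
  apply/eqP; rewrite -subv0; apply/subvP => z.
  rewrite memv_cap memv_ker memv0 => /andP[/eqP pz zH].
  rewrite -(eps_t_fix HD zH) eps_tE //; apply/eqP; apply: big1 => a _.
  have := congr1 (fun f : Vmod D (lone D) => f (vdiag HD a)) pz.
  rewrite phiE !ffunE /= => ->.
  by rewrite mulr0 scale0r.
split.
- exact: HtE.
- rewrite -img; symmetry; apply: limg_dim_eq; by rewrite capvC.
- exists phi; split => // h z zH.
  by rewrite !phiE /act_t phif_eps // intertw_Ht.
split.
  apply/eqP => H0.
  have : wvec D (lone D) \in Ht D.
    by rewrite HtE; apply: memv_span; apply: map_f; exact: mem_enum.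
  rewrite H0 memv0 => /eqP w0.
  have := Sc_wvec HD (lone D) (lone D); rewrite w0 Sc0 eqxx mul1r => /esym/eqP.
  by rewrite invr_eq0 (negbTE (sqd_neq0 HD _)).
move=> U sUH inv; case: (eqVneq U 0%VS) => [->|nz]; [by left|right].
set z := vpick U.
have zU : z \in U := memv_pick U.
have z0 : z != 0 by rewrite vpick0.
have zH : z \in Ht D := subvP sUH _ zU.
have [a0 Ha0] : exists a0, Sc a0 z != 0.
  case: (pickP (fun a => Sc a z != 0)) => [a0 H|none]; first by exists a0.
  case/eqP: z0; rewrite -(eps_t_fix HD zH) eps_tE //; apply: big1 => a _.
  by move: (none a) => /negbFE/eqP ->; rewrite mulr0 scale0r.
apply: subv_anti; rewrite sUH /= HtE; apply/span_subvP => w /mapP[x _ ->].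
have := inv (ebas (bx HD x a0)) z zU; rewrite act_bx // => H.
have -> : wvec D x = (sqrtC (qd x) * Sc a0 z)^-1 *: ((sqrtC (qd x) * Sc a0 z) *: wvec D x).
  by rewrite scalerA mulVf ?scale1r // mulf_neq0 ?sqd_neq0.
exact: memvZ.
Qed.
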